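(* Let $S_n$ be the star on $n$ vertices with edge set $E$, let $f=\{i,j\}\notin E$ be a pair of distinct vertices, and let $B=E\cup\{f\}$. Let $\det(xI-\mathfrak{D}_2(S_n)[B,B])=\sum_{k=0}^n a_kx^k$ and let $|a_t|=\max_k|a_k|$. Then $\lfloor\frac{n-2}{2}\rfloor\le t\le\lceil\frac n2\rceil$.
   Context: For a tree $T$, let $\mathcal{V}_2$ be the set of 2-element vertex subsets (edges regarded as elements of $\mathcal{V}_2$). The 2-Steiner distance matrix $\mathfrak{D}_2(T)$ is indexed by $\mathcal{V}_2$, with entry in row $\{i,j\}$, column $\{k,l\}$ equal to the minimum number of edges of a connected subtree of $T$ whose vertex set contains $i,j,k,l$. $M[B,B]$ denotes the principal submatrix with rows and columns indexed by $B$. *)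

(* Defs.v *)
From HB Require Import structures.
From mathcomp Require Import all_boot all_order all_algebra.
Set Implicit Arguments. Unset Strict Implicit. Unset Printing Implicit Defensive.
Import Order.TTheory GRing.Theory Num.Theory.

(* A simple graph on a finType T is an edge relation e : rel T
   (intended symmetric and irreflexive). *)

Definition induced_connected (T : finType) (e : rel T) (S : {set T}) : bool :=
  [forall x in S, forall y in S,
     connect (fun a b => [&& e a b, a \in S & b \in S]) x y].

Definition induced_edges (T : finType) (e : rel T) (S : {set T}) : nat :=
  #|[set p : T * T | [&& e p.1 p.2, p.1 \in S, p.2 \in S & enum_rank p.1 < enum_rank p.2]]|.

(* Steiner distance of a vertex set W in a tree: the minimum number of edges
   of a connected subtree whose vertex set contains W.  (Connected subtrees of
   a tree are exactly the induced subgraphs on connected vertex sets.) *)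
Definition steiner_dist (T : finType) (e : rel T) (W : {set T}) : nat :=
  \big[minn/#|T|]_(S : {set T} | (W \subset S) && induced_connected e S)
     induced_edges e S.

Definition star_rel (n : nat) (c : 'I_n) : rel 'I_n :=
  fun x y => (x != y) && ((x == c) || (y == c)).

Definition edge_set (T : finType) (e : rel T) : {set {set T}} :=
  [set [set p.1; p.2] | p in [set p : T * T | e p.1 p.2]].

(* Principal submatrix D_2(T)[B,B] of the 2-Steiner distance matrix, rows and
   columns indexed by B listed in the order of enum B (the characteristic
   polynomial does not depend on this order). *)
Definition steiner2_submx (T : finType) (e : rel T) (B : {set {set T}}) :
  'M[int]_(#|B|) :=
  \matrix_(a < #|B|, b < #|B|)
    (steiner_dist e (nth set0 (enum B) a :|: nth set0 (enum B) b) : int).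

(* Main.v *)
Require Import Defs.
From HB Require Import structures.
From mathcomp Require Import all_boot all_order all_algebra.
From mathcomp Require Import zify ring lra.
Import Order.TTheory GRing.Theory Num.Theory.
Local Open Scope ring_scope.

Definition cz (s : nat) (z : int) : int :=
  match z with Posz k => ('C(s, k))%:Z | Negz _ => 0 end.

Lemma cz_neg s z : z < 0 -> cz s z = 0.
Proof. by case: z. Qed.

Lemma cz_ge0 s z : 0 <= cz s z.
Proof. by case: z. Qed.

Lemma cz_big s z : (s%:Z < z) -> cz s z = 0.
Proof. case: z => // k; rewrite ltz_nat => h; by rewrite /cz bin_small. Qed.

Lemma cz_pos s z : 0 <= z -> z <= s%:Z -> 0 < cz s z.
Proof. case: z => // k _; rewrite lez_nat => h. by rewrite /cz ltz_nat bin_gt0. Qed.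

Lemma cz_rec s z : 1 <= z -> z * cz s z = (s%:Z - z + 1) * cz s (z - 1).
Proof.
case: z => // -[|k] //= _.
rewrite subn1 /=.
case: (leqP k s) => hk.
  have e : ((k.+1 * 'C(s, k.+1))%N : int) = ((s - k) * 'C(s, k))%N by rewrite mul_bin_left.
  rewrite -PoszM e PoszM; have -> : (Posz s - Posz k.+1 + 1) = Posz (s - k)%N by lia.
  by [].
rewrite (bin_small (n:=s) (m:=k)) ?bin_small ?mulr0 //; lia.
Qed.

Lemma cz_sym s z : cz s (s%:Z - z) = cz s z.
Proof.
case: (ltrP z 0) => hz.
  rewrite (cz_neg s _ hz) cz_big //; lia.
case: (ltrP (s%:Z) z) => hs.
  rewrite (cz_big s _ hs) cz_neg //; lia.
case: z hz hs => // k _; rewrite lez_nat => hk.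
by rewrite subzn // /cz bin_sub.
Qed.

Lemma cz_mono s z : 2 * z <= s%:Z + 1 -> cz s (z - 1) <= cz s z.
Proof.
move=> h. case: (ltrP z 1) => hz.
  rewrite cz_neg ?cz_ge0 //; lia.
have r := cz_rec s _ hz. move: (cz_ge0 s (z - 1)) (cz_ge0 s z) r.
move: (cz s (z - 1)) (cz s z) => u v hu hv r.
have h1 : 0 <= z * (v - u) by nia.
rewrite -subr_ge0; rewrite pmulr_rge0 in h1 => //; lia.
Qed.

Lemma cz_symE s x y : x + y = s%:Z -> cz s x = cz s y.
Proof. move=> h; rewrite -(cz_sym s y); congr cz; lia. Qed.

Definition bb (s : nat) (k : int) : int :=
  (s%:Z + 2) * cz s k + 7 * (s%:Z + 1) * cz s (k - 1)
  + 2 * (s%:Z + 2) * cz s (k - 2) - cz s (k - 3).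

Lemma bb_ge0 s k : 0 <= k -> k <= s%:Z + 2 -> 0 <= bb s k.
Proof.
move=> h0 h1; rewrite /bb.
have := cz_ge0 s k; have := cz_ge0 s (k - 1); have := cz_ge0 s (k-2); have := cz_ge0 s (k-3).
case: (ltrP k 3) => hk.
  rewrite (cz_neg s (k - 3)); last lia. move: (cz s k) (cz s (k-1)) (cz s (k-2)) => a b c; nia.
have r := cz_rec s (k - 2) ltac:(lia).
move: r; rewrite (_ : k - 2 - 1 = k - 3); last by ring.
move: (cz s k) (cz s (k-1)) (cz s (k-2)) (cz s (k-3)) => a b c d r ha hb hc hd.
nia.
Qed.

Lemma bb_inc s k : 0 <= k -> 2 * k + 1 <= s%:Z -> bb s k < bb s (k + 1).
Proof.
move=> h0 h1; rewrite /bb.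
have e1 : k + 1 - 1 = k by ring.
have e2 : k + 1 - 2 = k - 1 by ring.
have e3 : k + 1 - 3 = k - 2 by ring.
rewrite e1 e2 e3.
have m1 := cz_mono s (k + 1) ltac:(lia). rewrite e1 in m1.
have m2 := cz_mono s (k - 1) ltac:(lia). rewrite (_ : k - 1 - 1 = k - 2) in m2; last by ring.
have m3 := cz_mono s (k - 2) ltac:(lia). rewrite (_ : k - 2 - 1 = k - 3) in m3; last by ring.
have m4 := cz_mono s k ltac:(lia).
have g3 := cz_ge0 s (k - 3).
case: (ltrP k 1) => hk.
  have -> : k = 0 by lia.
  rewrite !sub0r (cz_neg s (-1)) // (cz_neg s (-2)) // (cz_neg s (-3)) //.
  have : cz s 0 = 1 by exact: (congr1 Posz (bin0 s)).
  move: m1; rewrite (_ : k = 0); last lia.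
  rewrite add0r => m1 e; rewrite e in m1 *; move: (cz s 1) m1 => x m1; nia.
have r := cz_rec s k hk.
have p := cz_pos s (k - 1) ltac:(lia) ltac:(lia).
move: (cz s (k + 1)) (cz s k) (cz s (k-1)) (cz s (k-2)) (cz s (k-3)) m1 m2 m3 m4 g3 r p
  => a b c d e m1 m2 m3 m4 g3 r p.
have q : k * (b - c) >= 2 * c by nia.
have q2 : 7 * (s%:Z + 1) * (b - c) >= k * (b - c) by nia.
nia.
Qed.

Lemma core_dec s j u v w : 1 <= j -> 2 * j <= s%:Z + 1 ->
  (j + 1) * w = (s%:Z - j) * v -> j * v = (s%:Z - j + 1) * u -> 0 < v ->
  w - v < 2 * (s%:Z + 2) * (v - u).
Proof.
move=> h1 h2 r1 r2 p.
have A : (j + 1) * (s%:Z - j + 1) * (v - u) = (j + 1) * (s%:Z - 2 * j + 1) * v.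
  have -> : (j + 1) * (s%:Z - j + 1) * (v - u) = (j + 1) * ((s%:Z - j + 1) * v - (s%:Z - j + 1) * u) by ring.
  rewrite -r2; ring.
have B : (j + 1) * (s%:Z - j + 1) * (w - v) = (s%:Z - j + 1) * (s%:Z - 2 * j - 1) * v.
  have -> : (j + 1) * (s%:Z - j + 1) * (w - v) = (s%:Z - j + 1) * ((j + 1) * w - (j + 1) * v) by ring.
  rewrite r1; ring.
have C : (s%:Z - j + 1) * (s%:Z - 2 * j - 1) * v < 2 * (s%:Z + 2) * ((j + 1) * (s%:Z - 2 * j + 1) * v).
  have q1 : 0 <= s%:Z - 2 * j + 1 by lia.
  have q2 : (s%:Z - j + 1) * (s%:Z - 2 * j - 1) < 2 * (s%:Z + 2) * ((j + 1) * (s%:Z - 2 * j + 1)) by nia.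
  nia.
have P : 0 < (j + 1) * (s%:Z - j + 1) by nia.
rewrite -A -B in C.
have : (j + 1) * (s%:Z - j + 1) * (w - v) < (j + 1) * (s%:Z - j + 1) * (2 * (s%:Z + 2) * (v - u)) by
  rewrite (_ : (j + 1) * (s%:Z - j + 1) * (2 * (s%:Z + 2) * (v - u)) = 2 * (s%:Z + 2) * ((j + 1) * (s%:Z - j + 1) * (v - u))) //; ring.
by rewrite ltr_pM2l.
Qed.

Lemma bb_dec s j : 1 <= j -> 2 * j <= s%:Z + 1 ->
  bb s (s%:Z + 3 - j) < bb s (s%:Z + 2 - j).
Proof.
move=> h1 h2; rewrite /bb.
rewrite (cz_symE s (s%:Z + 3 - j) (j - 3)); last ring.
rewrite (cz_symE s (s%:Z + 3 - j - 1) (j - 2)); last ring.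
rewrite (cz_symE s (s%:Z + 3 - j - 2) (j - 1)); last ring.
rewrite (cz_symE s (s%:Z + 3 - j - 3) (j)); last ring.
rewrite (cz_symE s (s%:Z + 2 - j) (j - 2)); last ring.
rewrite (cz_symE s (s%:Z + 2 - j - 1) (j - 1)); last ring.
rewrite (cz_symE s (s%:Z + 2 - j - 2) (j)); last ring.
rewrite (cz_symE s (s%:Z + 2 - j - 3) (j + 1)); last ring.
have r1 := cz_rec s (j + 1) ltac:(lia).
rewrite (_ : j + 1 - 1 = j) in r1; last ring.
rewrite (_ : s%:Z - (j + 1) + 1 = s%:Z - j) in r1; last ring.
have r2 := cz_rec s j h1.
have p := cz_pos s j ltac:(lia) ltac:(lia).
have c := core_dec s j (cz s (j - 1)) (cz s j) (cz s (j + 1)) h1 h2 r1 r2 p.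
have m2 := cz_mono s (j - 1) ltac:(lia). rewrite (_ : j - 1 - 1 = j - 2) in m2; last by ring.
have m3 := cz_mono s (j - 2) ltac:(lia). rewrite (_ : j - 2 - 1 = j - 3) in m3; last by ring.
move: (cz s (j + 1)) (cz s j) (cz s (j-1)) (cz s (j-2)) (cz s (j-3)) c m2 m3
  => a b cc d e c m2 m3.
nia.
Qed.

Lemma bb_top s : bb s (s%:Z + 3) = -1.
Proof.
rewrite /bb (cz_big s (s%:Z + 3)); last lia.
rewrite (cz_big s (s%:Z + 3 - 1)); last lia.
rewrite (cz_big s (s%:Z + 3 - 2)); last lia.
rewrite (_ : s%:Z + 3 - 3 = s%:Z); last ring.
by rewrite /cz binn; ring.
Qed.

Lemma bb_top1 s : bb s (s%:Z + 2) = s%:Z + 4.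
Proof.
rewrite /bb (cz_big s (s%:Z + 2)); last lia.
rewrite (cz_big s (s%:Z + 2 - 1)); last lia.
rewrite (_ : s%:Z + 2 - 2 = s%:Z); last ring.
rewrite (_ : s%:Z + 2 - 3 = s%:Z - 1); last ring.
rewrite (cz_symE s (s%:Z - 1) (1)); last ring.
have -> : cz s s%:Z = 1 by exact: (congr1 Posz (binn s)).
have -> : cz s 1 = s%:Z by exact: (congr1 Posz (bin1 s)).
ring.
Qed.

Lemma arith_main (n s t : nat) (a : {poly int}) :
  n = (s + 3)%N ->
  (forall k : nat, a`_k = - bb s k%:Z) ->
  (t <= n)%N ->
  (forall k : nat, (k <= n)%N -> `|a`_k| <= `|a`_t|) ->
  ((n - 2)./2 <= t <= uphalf n)%N.
Proof.
move=> hn ha ht hmax; subst n.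
have nb : forall k : nat, (k <= s + 2)%N -> `|a`_k| = bb s k%:Z.
  move=> k hk; rewrite ha normrN ger0_norm //; apply: bb_ge0; lia.
apply/andP; split.
  rewrite leqNgt; apply/negP => hlt.
  have h2 : (2 * t + 1 <= s)%N.
    move: hlt; lia.
  have := hmax t.+1 ltac:(lia).
  rewrite !nb; try lia.
  have := bb_inc s t%:Z ltac:(lia) ltac:(lia).
  rewrite (_ : t%:Z + 1 = t.+1%:Z); last lia.
  move=> h1 h2'; have := lt_le_trans h1 h2'; by rewrite ltxx.
rewrite leqNgt; apply/negP => hgt.
case: (ltngtP t (s + 3)) => htn; last first.
- subst t. have := hmax (s + 2)%N ltac:(lia).
  rewrite (ha (s + 3)%N) nb; last lia.
  rewrite normrN (_ : ((s + 3)%N : int) = s%:Z + 3); last lia.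
  rewrite bb_top (_ : ((s + 2)%N : int) = s%:Z + 2); last lia.
  rewrite bb_top1 normrN1; lia.
- lia.
have := hmax t.-1 ltac:(lia).
rewrite !nb; try lia.
have := bb_dec s (s%:Z + 3 - t%:Z) ltac:(lia) ltac:(lia).
rewrite (_ : s%:Z + 3 - (s%:Z + 3 - t%:Z) = t%:Z); last ring.
rewrite (_ : s%:Z + 2 - (s%:Z + 3 - t%:Z) = t.-1%:Z); last lia.
move=> h1 h2'; have := lt_le_trans h1 h2'; by rewrite ltxx.
Qed.


Lemma coefP s i : ((('X + 1) ^+ s : {poly int})`_i) = ('C(s, i))%:Z.
Proof.
elim: s i => [|s IH] i.
  by rewrite expr0 coef1; case: i.
rewrite exprS mulrC mulrDr mulr1 coefD coefMX !IH.
case: i => [|i] /=; first by rewrite add0r !bin0.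
by rewrite binS PoszD addrC.
Qed.

Lemma czE s k d : (if (k < d)%N then 0 else ('C(s, k - d))%:Z) = cz s (k%:Z - d%:Z).
Proof.
case: ifP => h.
  rewrite cz_neg //; lia.
by rewrite subzn // leqNgt h.
Qed.

Definition Qp (s : nat) : {poly int} :=
  'X^3 - ((2 * (s + 2))%N%:R) * 'X^2 - ((7 * (s + 1))%N%:R) * 'X^1 - (s + 2)%N%:R.

Lemma coefPQ s k : ((('X + 1) ^+ s * Qp s)`_k) = - bb s k%:Z.
Proof.
set P := ('X + 1) ^+ s.
have -> : P * Qp s = P * 'X^3 - (P * 'X^2) *+ (2 * (s + 2)) - (P * 'X^1) *+ (7 * (s + 1)) - P *+ (s + 2).
  rewrite /Qp; ring.
rewrite !coefB !coefMn !coefMXn !coefP (czE s k 3) (czE s k 2) (czE s k 1).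
rewrite (_ : ('C(s, k))%:Z = cz s k%:Z) //.
rewrite /bb. ring.
Qed.


Lemma sylvester (R : comNzRingType) N k (U : 'M[R]_(N,k)) (V : 'M[R]_(k,N)) (y : R) :
  y ^+ k * \det (y%:M - U *m V) = y ^+ N * \det (y%:M - V *m U).
Proof.
pose M1 := block_mx 1%:M U 0 1%:M : 'M[R]_(N + k).
pose M2 := block_mx (y%:M - U *m V) 0 V 1%:M : 'M[R]_(N + k).
pose Z := block_mx y%:M U V 1%:M : 'M[R]_(N + k).
pose M3 := block_mx 1%:M 0 (-V) y%:M : 'M[R]_(N + k).
have e1 : M1 *m M2 = Z.
  rewrite /M1 /M2 /Z mulmx_block !mul1mx !mul0mx ?mulmx0 !mulmx1 ?add0r ?addr0.
  by rewrite subrK.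
have e2 : M3 *m Z = block_mx y%:M U 0 (y%:M - V *m U).
  rewrite /M3 /Z mulmx_block !mul1mx !mul0mx !mulmx1 !addr0.
  by rewrite mulNmx mul_mx_scalar mul_scalar_mx addNr addrC mulNmx.
have dZ : \det Z = \det (y%:M - U *m V).
  by rewrite -e1 det_mulmx /M1 /M2 det_ublock det_lblock !det1 !mul1r mulr1.
have := congr1 determinant e2.
rewrite det_mulmx det_ublock /M3 det_lblock det1 mul1r dZ !det_scalar.
by move=> ->.
Qed.


Lemma det3 (R : comNzRingType) (F : nat -> nat -> R) :
  \det (\matrix_(a < 3, b < 3) F a b) =
  F 0 0 * (F 1 1 * F 2 2 - F 1 2 * F 2 1)
  - F 0 1 * (F 1 0 * F 2 2 - F 1 2 * F 2 0)
  + F 0 2 * (F 1 0 * F 2 1 - F 1 1 * F 2 0).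
Proof.
rewrite (expand_det_row _ 0) !big_ord_recl big_ord0 /cofactor.
rewrite !(expand_det_row _ 0) !big_ord_recl !big_ord0 /cofactor !det_mx11 !mxE /=.
rewrite /bump /=.
ring.
Qed.

Set Implicit Arguments. Unset Strict Implicit. Unset Printing Implicit Defensive.

Section Star.
Local Open Scope nat_scope.
Variables (n : nat) (c : 'I_n).

Lemma star_ie_in (S : {set 'I_n}) : c \in S -> induced_edges (star_rel c) S = #|S :\ c|.
Proof.
move=> cS.
pose psi (v : 'I_n) := if (enum_rank c < enum_rank v)%N then (c, v) else (v, c).
have inj : {in S :\ c &, injective psi}.
  move=> u v; rewrite !inE => /andP[uc _] /andP[vc _]; rewrite /psi.
  by case: ifP => _; case: ifP => _ [] //; move=> *; subst.
rewrite /induced_edges -(card_in_imset inj).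
apply: eq_card => -[x y]; rewrite inE /=.
apply/idP/imsetP.
- case/and4P => /andP[xy /orP[] /eqP e] xS yS r.
  + subst x; exists y; first by rewrite !inE yS eq_sym xy.
    by rewrite /psi r.
  + subst y; exists x; first by rewrite !inE xS xy.
    by rewrite /psi ltnNge ltnW.
- case=> v; rewrite !inE => /andP[vc vS]; rewrite /psi.
  have rne : enum_rank c != enum_rank v.
    by apply/negP => /eqP /enum_rank_inj e; rewrite e eqxx in vc.
  case: ifP => r [-> ->].
  + by rewrite /star_rel eq_sym vc eqxx /= cS vS r.
  + rewrite /star_rel vc eqxx orbT cS vS /=.
    by rewrite ltn_neqAle eq_sym rne /= leqNgt r.
Qed.

Lemma star_conn_c (S : {set 'I_n}) (x y : 'I_n) :
  x \in S -> y \in S -> x != y -> induced_connected (star_rel c) S -> c \in S.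
Proof.
move=> xS yS xy /forallP /(_ x) /implyP /(_ xS) /forallP /(_ y) /implyP /(_ yS).
case/connectP => -[|z p] /=; first by move=> _ e; rewrite e eqxx in xy.
case/andP => /and3P[/andP[_ /orP[] /eqP <-] // ] _.
Qed.

Lemma star_conn_add (W : {set 'I_n}) : induced_connected (star_rel c) (c |: W).
Proof.
apply/forallP => x; apply/implyP => xS; apply/forallP => y; apply/implyP => yS.
have cS : c \in c |: W by rewrite !inE eqxx.
have toc : forall z, z \in c |: W ->
   connect (fun a b => [&& star_rel c a b, a \in c |: W & b \in c |: W]) z c.
  move=> z zS; case: (eqVneq z c) => [->|zc]; first exact: connect0.
  by apply: connect1; rewrite /star_rel zc eqxx orbT zS cS.
have fromc : forall z, z \in c |: W ->
   connect (fun a b => [&& star_rel c a b, a \in c |: W & b \in c |: W]) c z.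
  move=> z zS; case: (eqVneq z c) => [->|zc]; first exact: connect0.
  by apply: connect1; rewrite /star_rel eq_sym zc eqxx zS cS.
exact: connect_trans (toc x xS) (fromc y yS).
Qed.

Lemma star_steiner (W : {set 'I_n}) (x y : 'I_n) :
  x \in W -> y \in W -> x != y -> steiner_dist (star_rel c) W = #|W :\ c|.
Proof.
move=> xW yW xy; rewrite /steiner_dist.
apply/eqP; rewrite eqn_leq; apply/andP; split.
  have P0 : (W \subset c |: W) && induced_connected (star_rel c) (c |: W).
    by rewrite subsetUr star_conn_add.
  have := @bigmin_le_cond _ nat _ #|'I_n| (c |: W)
    (fun S => (W \subset S) && induced_connected (star_rel c) S)
    (fun S => induced_edges (star_rel c) S) P0.
  rewrite minEnat => /leq_trans; apply.
  rewrite star_ie_in ?setU11 //.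
  have -> : (c |: W) :\ c = W :\ c.
    by apply/setP => z; rewrite !inE; case: (z == c).
  by [].
apply: (big_ind (fun m => #|W :\ c| <= m)%N).
- exact: max_card.
- by move=> p q hp hq; rewrite leq_min hp hq.
- move=> S /andP[sWS cS].
  have cin := star_conn_c (subsetP sWS x xW) (subsetP sWS y yW) xy cS.
  rewrite star_ie_in //; apply: subset_leq_card; exact: setSD.
Qed.

End Star.

Section StarB.
Variables (n : nat) (c i j : 'I_n).
Hypotheses (hij : i != j) (hf : [set i; j] \notin edge_set (star_rel c)).

Lemma memE S : S \in edge_set (star_rel c) <-> exists2 u, u != c & S = [set c; u].
Proof.
split.
- case/imsetP => -[x y]; rewrite inE /= /star_rel => /andP[xy /orP[] /eqP e] ->; subst.
  + by exists y; rewrite // eq_sym.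
  + by exists x; rewrite // setUC.
- case=> u uc ->; apply/imsetP; exists (c, u) => //.
  by rewrite inE /star_rel /= eq_sym uc eqxx.
Qed.

Lemma ic : i != c.
Proof.
apply/negP => /eqP e; apply/negP: hf; rewrite negbK; apply/(memE _); exists j.
  by rewrite -e eq_sym.
by rewrite e.
Qed.

Lemma jc : j != c.
Proof.
apply/negP => /eqP e; apply/negP: hf; rewrite negbK; apply/(memE _); exists i.
  by rewrite -e.
by rewrite e setUC.
Qed.

Let f := [set i; j].
Let B := f |: edge_set (star_rel c).

Lemma caseB S : S \in B -> S = f \/ exists2 u, u != c & S = [set c; u].
Proof.
rewrite /B in_setU1 => /orP[/eqP ->|/memE h]; [by left | by right].
Qed.

Lemma edge_neq_f u : u != c -> ([set c; u] == f) = false.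
Proof.
move=> uc; apply/negP => /eqP e.
have : c \in f by rewrite -e !inE eqxx.
by rewrite /f !inE ![c == _]eq_sym (negbTE ic) (negbTE jc).
Qed.

Lemma edge_eq u v : u != c -> v != c -> ([set c; u] == [set c; v]) = (u == v).
Proof.
move=> uc vc; apply/eqP/eqP => [e|->] //.
have : u \in [set c; v] by rewrite -e !inE eqxx orbT.
by rewrite !inE (negbTE uc) => /eqP.
Qed.

Definition GG (S : {set 'I_n}) : int := (S == [set i; j])%:R.
Definition HH (S : {set 'I_n}) : int := ((S == [set c; i]) || (S == [set c; j]))%:R.

Lemma card3 (u : 'I_n) : #|u |: f| = (2 + (u \notin f))%N.
Proof. by rewrite cardsU1 /f cards2 hij addnC. Qed.

Lemma entry S T : S \in B -> T \in B ->
  (#|(S :|: T) :\ c|)%:Z + (S == T)%:R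
  = 2 + GG T + GG S * (1 - GG T - HH T) - HH S * GG T.
Proof.
have fc : f :\ c = f.
  apply/setP => z; rewrite /f !inE; case: (eqVneq z c) => [->|] //=.
  by rewrite ![c == _]eq_sym (negbTE ic) (negbTE jc).
have ec : forall u, u != c -> [set c; u] :\ c = [set u].
  move=> u uc; apply/setP => z; rewrite !inE; case: (eqVneq z c) => [->|] //=.
  by rewrite eq_sym (negbTE uc).
have Hf : HH f = 0.
  by rewrite /HH /f -/f eq_sym (edge_neq_f ic) eq_sym (edge_neq_f jc).
have He : forall u, u != c -> HH [set c; u] = ((u == i) || (u == j))%:R.
  by move=> u uc; rewrite /HH !edge_eq // ?ic ?jc.
have Ge : forall u, u != c -> GG [set c; u] = 0.
  by move=> u uc; rewrite /GG -/f edge_neq_f.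
have Gf : GG f = 1 by rewrite /GG eqxx.
move=> /caseB [->|[u uc ->]] /caseB [->|[v vc ->]].
- by rewrite setUid fc eqxx /f cards2 hij Hf Gf.
- rewrite eq_sym edge_neq_f // Gf Ge // He // setDUl fc ec //.
  rewrite setUC -/(v |: f) card3 /f !inE.
  by case: (v == i); case: (v == j); rewrite /= ?mulr0 ?subr0.
- rewrite edge_neq_f // Gf Ge // He // setDUl fc ec //.
  rewrite -/(u |: f) card3 /f !inE.
  by case: (u == i); case: (u == j); rewrite /= ?mul0r ?mulr0 ?subr0.
- rewrite !Ge // edge_eq // setDUl !ec //.
  rewrite cardsU1 cards1 !inE.
  by rewrite mul0r mulr0 !subr0; case: (eqVneq u v).
Qed.

End StarB.

Section Mx.
Variables (n : nat) (c i j : 'I_n).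
Hypotheses (hij : i != j) (hf : [set i; j] \notin edge_set (star_rel c)).

Let f := [set i; j].
Let B := f |: edge_set (star_rel c).
Let N := #|B|.

Lemma cardB : N = n.
Proof.
pose phi (v : 'I_n) := if v == c then f else [set c; v].
have ic := ic hij hf; have jc := jc hij hf.
have inj : injective phi.
  move=> u v; rewrite /phi.
  case: (eqVneq u c) => [->|uc]; case: (eqVneq v c) => [->|vc] //.
  - by move/eqP; rewrite eq_sym (edge_neq_f hij hf vc).
  - by move/eqP; rewrite (edge_neq_f hij hf uc).
  - by move/eqP; rewrite (edge_eq uc vc) => /eqP.
rewrite /N.
have -> : B = phi @: [set: 'I_n].
  apply/setP => S; apply/idP/imsetP.
  - case/caseB => [->|[u uc ->]].
      by exists c => //; rewrite /phi eqxx.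
    by exists u => //; rewrite /phi (negbTE uc).
  - case=> v _ ->; rewrite /phi /B; case: ifP => vc; first by rewrite setU11.
    move/negbT: vc => vc.
    rewrite in_setU1; apply/orP; right; apply/(memE _).
    by exists v => //; rewrite vc.
by rewrite card_imset // cardsT card_ord.
Qed.


Let Sa (a : 'I_N) := nth set0 (enum B) a.

Lemma Sa_in a : Sa a \in B.
Proof. by rewrite /Sa -mem_enum mem_nth // -cardE. Qed.

Lemma Sa_eq a b : (Sa a == Sa b) = (a == b).
Proof. by rewrite /Sa nth_uniq ?enum_uniq // -?cardE. Qed.

Let g a := GG i j (Sa a).
Let h a := HH c i j (Sa a).

Definition uf (k : nat) (x y : int) : int :=
  if k == 0%N then 1 else if k == 1%N then x else y.
Definition vf (k : nat) (x y : int) : int :=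
  if k == 0%N then 2 + x else if k == 1%N then 1 - x - y else - x.
Definition Um : 'M[int]_(N, 3) := \matrix_(a, k) uf k (g a) (h a).
Definition Vm : 'M[int]_(3, N) := \matrix_(k, b) vf k (g b) (h b).

Lemma two_in (S : {set 'I_n}) : S \in B -> exists x, exists2 y, (x \in S) && (y \in S) & x != y.
Proof.
case/caseB => [->|[u uc ->]].
  exists i; exists j; last exact: hij.
  by rewrite !inE !eqxx orbT.
exists c; exists u; last by rewrite eq_sym.
by rewrite !inE !eqxx orbT.
Qed.

Lemma UV : steiner2_submx (star_rel c) B + 1%:M = Um *m Vm.
Proof.
apply/matrixP => a b; rewrite !mxE.
rewrite -/(Sa a) -/(Sa b).
rewrite !big_ord_recl big_ord0 !mxE.
rewrite /uf /vf [X in _ = X]/=.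
have [x [y /andP[xa ya] xy]] := two_in (Sa_in a).
rewrite (@star_steiner n c _ x y); [|by rewrite inE xa|by rewrite inE ya|exact: xy].
rewrite -Sa_eq (entry hij hf (Sa_in a) (Sa_in b)) /g /h; ring.
Qed.


Lemma GGf : GG i j f = 1.
Proof. by rewrite /GG eqxx. Qed.

Lemma GGe u : u != c -> GG i j [set c; u] = 0.
Proof. by move=> uc; rewrite /GG (edge_neq_f hij hf uc). Qed.

Lemma HHf : HH c i j f = 0.
Proof.
by rewrite /HH eq_sym (edge_neq_f hij hf (ic hij hf)) eq_sym (edge_neq_f hij hf (jc hij hf)).
Qed.

Lemma HHe u : u != c -> HH c i j [set c; u] = ((u == i) || (u == j))%:R.
Proof. by move=> uc; rewrite /HH !edge_eq // ?(ic hij hf) ?(jc hij hf). Qed.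

Lemma ghcase b : (g b = 0 /\ h b = 0) \/ (g b = 1 /\ h b = 0) \/ (g b = 0 /\ h b = 1).
Proof.
rewrite /g /h; case/caseB: (Sa_in b) => [->|[u uc ->]].
  by right; left; rewrite GGf HHf.
rewrite GGe // HHe //.
by case: (u == i); case: (u == j); [right; right|right;right|right;right|left].
Qed.

Lemma sum_Sa (F : {set 'I_n} -> int) : \sum_(b < N) F (Sa b) = \sum_(S in B) F S.
Proof.
rewrite [RHS]big_enum_val; apply: eq_bigr => b _; rewrite /Sa.
by rewrite (enum_val_nth set0).
Qed.

Lemma sumG : \sum_(b < N) g b = 1.
Proof.
rewrite /g (sum_Sa (GG i j)) (bigD1 f) ?setU11 //= GGf big1 ?addr0 //.
by move=> S /andP[_ Sf]; rewrite /GG (negbTE Sf).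
Qed.

Lemma sumH : \sum_(b < N) h b = 2.
Proof.
have ic := ic hij hf; have jc := jc hij hf.
have eiB : [set c; i] \in B.
  by rewrite /B in_setU1; apply/orP; right; apply/(memE _); exists i.
have ejB : [set c; j] \in B.
  by rewrite /B in_setU1; apply/orP; right; apply/(memE _); exists j.
have eij : [set c; j] != [set c; i] by rewrite edge_eq // eq_sym.
rewrite /h (sum_Sa (HH c i j)) (bigD1 [set c; i]) //= (bigD1 [set c; j]) /=; last by rewrite ejB eij.
rewrite big1 ?addr0.
  by rewrite !HHe // !eqxx orbT.
by move=> S /andP[/andP[_ S1] S2]; rewrite /HH (negbTE S1) (negbTE S2).
Qed.

Lemma sumP (P : int -> int -> int) :
  \sum_(b < N) P (g b) (h b) = P 0 0 * N%:R + (P 1 0 - P 0 0) + 2 * (P 0 1 - P 0 0).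
Proof.
rewrite (eq_bigr (fun b => P 0 0 + (P 1 0 - P 0 0) * g b + (P 0 1 - P 0 0) * h b)); last first.
  move=> b _; case: (ghcase b) => [[-> ->]|[[-> ->]|[-> ->]]]; ring.
rewrite !big_split /= -!mulr_sumr sumG sumH sumr_const card_ord.
rewrite -mulr_natr; ring.
Qed.

Definition Fc (k l : nat) : int :=
  let P := fun x y => vf k x y * uf l x y in
  P 0 0 * N%:R + (P 1 0 - P 0 0) + 2 * (P 0 1 - P 0 0).

Lemma VU : Vm *m Um = \matrix_(k < 3, l < 3) Fc k l.
Proof.
apply/matrixP => k l; rewrite !mxE.
rewrite (eq_bigr (fun b => (fun x y => vf k x y * uf l x y) (g b) (h b))); last first.
  by move=> b _; rewrite !mxE.
exact: sumP.
Qed.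

Lemma cp_formula : char_poly (steiner2_submx (star_rel c) B) = ('X + 1) ^+ (n - 3) * Qp (n - 3).
Proof.
set A := steiner2_submx (star_rel c) B.
set y : {poly int} := 'X + 1.
have e1 : char_poly_mx A = y%:M - map_mx polyC (Um *m Vm).
  rewrite -UV; apply/matrixP => a b; rewrite !mxE.
  case: (a == b); rewrite /y /= ?polyCD ?mulr1n ?mulr0n ?polyC1 ?polyC0; ring.
have syl := @sylvester _ _ _ (map_mx polyC Um) (map_mx polyC Vm) y.
rewrite -!map_mxM VU -e1 in syl.
have e2 : y%:M - map_mx polyC (\matrix_(k < 3, l < 3) Fc k l)
        = \matrix_(k < 3, l < 3) (y *+ ((k : nat) == l) - (Fc k l)%:P).
  by apply/matrixP => k l; rewrite !mxE.
rewrite e2 (@det3 _ (fun k l => y *+ (k == l) - (Fc k l)%:P)) /Fc /uf /vf /= in syl.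
have y0 : y != 0 by rewrite /y -polyC1 monic_neq0 // monicXaddC.
have n3 : (3 <= n)%N.
  have ic := ic hij hf; have jc := jc hij hf.
  have : (#|c |: [set i; j]| <= n)%N by rewrite -[X in (_ <= X)%N]card_ord max_card.
  by rewrite cardsU1 cards2 hij !inE ![c == _]eq_sym (negbTE ic) (negbTE jc).
move: syl; rewrite -/(char_poly A); move: (char_poly A) => cp.
rewrite cardB.
have -> : n = ((n - 3) + 3)%N by rewrite subnK.
rewrite addnK; set s := (n - 3)%N.
rewrite exprD => syl.
apply: (mulfI (expf_neq0 3 y0)).
rewrite syl /Qp /y.
ring.
Qed.

Lemma n3 : (3 <= n)%N.
Proof.
have ic := ic hij hf; have jc := jc hij hf.
have : (#|c |: [set i; j]| <= n)%N by rewrite -[X in (_ <= X)%N]card_ord max_card.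
by rewrite cardsU1 cards2 hij !inE ![c == _]eq_sym (negbTE ic) (negbTE jc).
Qed.

End Mx.

Theorem theorem5p4 (n : nat) (c i j : 'I_n) (t : nat) :
  i != j ->
  [set i; j] \notin edge_set (star_rel c) ->
  let B := [set i; j] |: edge_set (star_rel c) in
  let a := char_poly (steiner2_submx (star_rel c) B) in
  (t <= n)%N ->
  (forall k : nat, (k <= n)%N -> `|a`_k| <= `|a`_t|) ->
  ((n - 2)./2 <= t <= uphalf n)%N.
Proof.
move=> hij hf B a ht hmax.
have h3 := n3 hij hf.
apply: (arith_main n (n - 3) t a) => //.
- by rewrite subnK.
- by move=> k; rewrite /a /B (cp_formula hij hf) coefPQ.
Qed.
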